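(* For all $u_1,u_2\in[0,1]$: (i) $\lim_{\lambda\to\infty}C_\lambda(u_1,u_2)=\max\{u_1+u_2-1,0\}$ (the Fréchet–Hoeffding lower bound); (ii) $\lim_{\lambda\to-\infty}C_\lambda(u_1,u_2)=\min\{u_1,u_2\}$ (the Fréchet–Hoeffding upper bound).
   Context: For $\lambda\in\mathbb{R}$ define $\phi_\lambda$ on $[0,\infty)$ by $\phi_\lambda(x)=\frac{1}{\lambda(\lambda+1)}(x^{\lambda+1}-x+\lambda(1-x))$ for $\lambda\neq-1,0$; $\phi_0(x)=1-x+x\log x$; $\phi_{-1}(x)=x-1-\log x$; values at $x=0$ are limits, so $\phi_\lambda(0)=1/(\lambda+1)$ for $\lambda>-1$ and $\phi_\lambda(0)=\infty$ for $\lambda\le-1$. On $[0,1]$, $\phi_\lambda$ is convex, strictly decreasing, $\phi_\lambda(1)=0$. The pseudoinverse is $\phi_\lambda^{[-1]}(t)=\phi_\lambda^{-1}(t)$ (inverse of $\phi_\lambda|_{[0,1]}$) for $0\le t<\phi_\lambda(0)$ and $0$ for $t\ge\phi_\lambda(0)$. The power-divergence (PD) copula is $C_\lambda(u_1,u_2)=\phi_\lambda^{[-1]}(\phi_\lambda(u_1)+\phi_\lambda(u_2))$, $u_1,u_2\in[0,1]$ (with $\phi_\lambda^{[-1]}(\infty)=0$). *)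

(* Defs.v *)
From Stdlib Require Import Reals Lra ClassicalEpsilon.
From Coquelicot Require Import Coquelicot.
Open Scope R_scope.

Definition phi (lam x : R) : Rbar :=
  if Rlt_dec 0 x then
    if Req_EM_T lam 0 then Finite (1 - x + x * ln x)
    else if Req_EM_T lam (-1) then Finite (x - 1 - ln x)
    else Finite ((Rpower x (lam + 1) - x + lam * (1 - x)) / (lam * (lam + 1)))
  else (* x = 0: limit value *)
    if Rlt_dec (-1) lam then Finite (1 / (lam + 1)) else p_infty.

(* Pseudoinverse: the inverse of phi_lambda restricted to [0,1] where it is
   defined (0 <= t < phi_lambda(0)); 0 otherwise (t >= phi_lambda(0), t = +oo). *)
Definition phi_pinv (lam : R) (t : Rbar) : R :=
  match t with
  | Finite t' =>
      match excluded_middle_informative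
              (exists x : R, 0 <= x <= 1 /\ phi lam x = Finite t') with
      | left H => proj1_sig (constructive_indefinite_description _ H)
      | right _ => 0
      end
  | _ => 0
  end.

Definition PD_copula (lam u1 u2 : R) : R :=
  phi_pinv lam (Rbar_plus (phi lam u1) (phi lam u2)).

(* Main.v *)
Require Import Defs.
From Stdlib Require Import Reals Lra Psatz ClassicalEpsilon.
From Coquelicot Require Import Coquelicot.
Open Scope R_scope.

Definition G (lam x : R) : R := exp ((lam+1) * ln x) - x + lam * (1 - x).

Lemma phi_pos lam x : 0 < x -> lam <> 0 -> lam <> -1 ->
  phi lam x = Finite (G lam x / (lam*(lam+1))).
Proof.
  intros Hx H0 H1. unfold phi, G, Rpower.
  destruct (Rlt_dec 0 x); [|lra].
  destruct (Req_EM_T lam 0); [lra|].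
  destruct (Req_EM_T lam (-1)); [lra|]. reflexivity.
Qed.

Lemma phi0_big lam : -1 < lam -> phi lam 0 = Finite (1/(lam+1)).
Proof. intros H. unfold phi. destruct (Rlt_dec 0 0); [lra|].
  destruct (Rlt_dec (-1) lam); [reflexivity|lra]. Qed.

Lemma phi0_small lam : lam <= -1 -> phi lam 0 = p_infty.
Proof. intros H. unfold phi. destruct (Rlt_dec 0 0); [lra|].
  destruct (Rlt_dec (-1) lam); [lra|reflexivity]. Qed.

Lemma phi_not_minf lam x : phi lam x <> m_infty.
Proof. unfold phi. repeat destruct (Rlt_dec _ _); repeat destruct (Req_EM_T _ _); discriminate. Qed.

Lemma pinv_cases lam t (P : R -> Prop) :
  (forall x, 0 <= x <= 1 -> phi lam x = Finite t -> P x) ->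
  (~ (exists x, 0 <= x <= 1 /\ phi lam x = Finite t) -> P 0) ->
  P (phi_pinv lam (Finite t)).
Proof.
  intros H1 H2. unfold phi_pinv.
  destruct (excluded_middle_informative _) as [H|H].
  - destruct (constructive_indefinite_description _ H) as [x [Hx Hp]]. simpl. auto.
  - auto.
Qed.

Lemma exp_le a b : a <= b -> exp a <= exp b.
Proof. intros [H|H]. left; apply exp_increasing; auto. subst; lra. Qed.

Lemma exp_sq z : 0 <= z -> 1 + z + z*z/4 <= exp z.
Proof.
  intros Hz. assert (E : exp z = exp (z/2) * exp (z/2)) by (rewrite <- exp_plus; f_equal; field).
  rewrite E. pose proof (exp_ineq1_le (z/2)). nra.
Qed.

Lemma ln_le_sub1 y : 0 < y -> ln y <= y - 1.
Proof. intros Hy. pose proof (exp_ineq1_le (ln y)) as H. rewrite exp_ln in H; lra. Qed.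

Lemma bern_big r x : 1 <= r -> 0 < x -> 1 + r*(x-1) <= exp (r * ln x).
Proof.
  intros Hr Hx. set (w := r*x - r + 1).
  destruct (Rle_lt_dec w 0) as [Hw|Hw].
  - pose proof (exp_pos (r*ln x)). unfold w in Hw. lra.
  - assert (H1 : ln w - ln x <= w / x - 1).
    { pose proof (ln_le_sub1 (w * / x) ltac:(apply Rmult_lt_0_compat; [lra|apply Rinv_0_lt_compat; lra])) as H.
      rewrite ln_mult, ln_Rinv in H by (try apply Rinv_0_lt_compat; lra). unfold Rdiv. lra. }
    assert (H2 : - ln x <= / x - 1).
    { pose proof (ln_le_sub1 (/ x) ltac:(apply Rinv_0_lt_compat; lra)) as H. rewrite ln_Rinv in H by lra. lra. }
    assert (H3 : (w / x - 1) + (r - 1) * (/ x - 1) = 0). { unfold w. field. lra. }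
    assert (H5 : (r-1)*(-ln x) <= (r-1)*(/x - 1)) by (apply Rmult_le_compat_l; lra).
    assert (H4 : ln w <= r * ln x) by lra.
    pose proof (exp_le _ _ H4) as H. rewrite exp_ln in H by lra. unfold w in H. lra.
Qed.

Lemma bern_neg p x : p <= 0 -> 0 < x -> 1 + p*(x-1) <= exp (p * ln x).
Proof.
  intros Hp Hx. pose proof (exp_ineq1_le (p*ln x)). pose proof (ln_le_sub1 x Hx).
  assert (p*(x-1) <= p * ln x) by (apply Rmult_le_compat_neg_l; lra). lra.
Qed.

Lemma G_one lam : G lam 1 = 0.
Proof. unfold G. rewrite ln_1, Rmult_0_r, exp_0. ring. Qed.

Lemma G_nonneg lam x : (0 <= lam \/ lam <= -1) -> 0 < x -> 0 <= G lam x.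
Proof.
  intros [H|H] Hx; unfold G.
  - pose proof (bern_big (lam+1) x ltac:(lra) Hx). nra.
  - pose proof (bern_neg (lam+1) x ltac:(lra) Hx). nra.
Qed.

Lemma exists_sol lam d T : 0 < d <= 1 -> G lam 1 <= T <= G lam d ->
  exists x, d <= x <= 1 /\ G lam x = T.
Proof.
  intros Hd HT.
  destruct (Req_dec T (G lam 1)) as [E|E]. { exists 1. split; [lra|auto]. }
  destruct (Req_dec T (G lam d)) as [E'|E']. { exists d. split; [lra|auto]. }
  assert (d < 1). { destruct (Req_dec d 1); [subst; lra|lra]. }
  destruct (Ranalysis5.IVT_interv (fun x => T - G lam x) d 1) as [x [Hx Hf]].
  - intros a Ha. apply continuity_pt_filterlim. apply (ex_derive_continuous (fun x => T - G lam x)).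
    unfold G. auto_derive. lra.
  - lra.
  - lra.
  - lra.
  - exists x. split; [lra|]. lra.
Qed.

Lemma rbp x y : Rbar_plus (Finite x) (Finite y) = Finite (x+y).
Proof. reflexivity. Qed.

Definition Gt (lam x : R) : R := if Rlt_dec 0 x then G lam x else lam.

Lemma phi_Gt lam x : 0 < lam -> 0 <= x -> phi lam x = Finite (Gt lam x / (lam*(lam+1))).
Proof.
  intros Hl Hx. unfold Gt. destruct (Rlt_dec 0 x).
  - apply phi_pos; lra.
  - assert (x = 0) by lra. subst. rewrite phi0_big by lra. f_equal. field. lra.
Qed.

Lemma Gt_bounds lam x : 0 < lam -> 0 <= x <= 1 ->
  (lam*(1-x) - 1 <= Gt lam x <= lam*(1-x)) /\ 0 <= Gt lam x.
Proof.
  intros Hl Hx. unfold Gt. destruct (Rlt_dec 0 x).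
  - assert (Hln : ln x <= 0) by (rewrite <- ln_1; apply ln_le; lra).
    assert (H1 : (lam+1) * ln x <= ln x) by nra.
    pose proof (exp_le _ _ H1) as H2. rewrite exp_ln in H2 by lra.
    pose proof (exp_pos ((lam+1) * ln x)).
    pose proof (G_nonneg lam x ltac:(lra) r).
    unfold G in *. split; [split|]; nra.
  - assert (x = 0) by lra. subst. split; [split|]; nra.
Qed.

Lemma part1 u1 u2 : 0 <= u1 <= 1 -> 0 <= u2 <= 1 ->
  is_lim (fun lam => PD_copula lam u1 u2) p_infty (Finite (Rmax (u1 + u2 - 1) 0)).
Proof.
  intros hu1 hu2. apply is_lim_spec. intros eps. simpl.
  exists (Rmax 1 (4/eps)). intros lam Hlam.
  assert (Hl1 : 1 < lam) by (eapply Rle_lt_trans; [apply Rmax_l|exact Hlam]).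
  assert (Hl2 : 4/eps < lam) by (eapply Rle_lt_trans; [apply Rmax_r|exact Hlam]).
  pose proof (cond_pos eps) as Heps.
  assert (Hle : 4 < lam * eps).
  { apply Rmult_lt_compat_r with (r:=eps) in Hl2; auto. unfold Rdiv in Hl2.
    rewrite Rmult_assoc, Rinv_l, Rmult_1_r in Hl2; lra. }
  set (a := u1+u2-1).
  unfold PD_copula. rewrite (phi_Gt lam u1), (phi_Gt lam u2) by lra. rewrite rbp.
  assert (HK : 0 < lam*(lam+1)) by nra.
  destruct (Gt_bounds lam u1) as [[A1 B1] C1]; try lra.
  destruct (Gt_bounds lam u2) as [[A2 B2] C2]; try lra.
  apply pinv_cases.
  - intros x Hx Hp. rewrite phi_Gt in Hp by lra. injection Hp as Hp.
    assert (HT : Gt lam x = Gt lam u1 + Gt lam u2).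
    { replace (Gt lam x) with (Gt lam x / (lam*(lam+1)) * (lam*(lam+1))) by (field; lra).
      rewrite Hp. field. lra. }
    destruct (Gt_bounds lam x) as [[A3 B3] C3]; try lra.
    assert (U : lam * (x - a) <= 2) by (unfold a; nra).
    assert (L : -1 <= lam * (x - a)) by (unfold a; nra).
    unfold Rmax. destruct (Rle_dec a 0); apply Rabs_def1; nra.
  - intros Hno.
    assert (Ha : a < eps).
    { destruct (Rlt_le_dec a eps) as [h|h]; auto. exfalso. apply Hno.
      destruct (exists_sol lam (eps/2) (Gt lam u1 + Gt lam u2)) as [x [Hx Hg]].
      + split; [lra|]. unfold a in h; lra.
      + rewrite G_one. split; [lra|].
        assert (Gd: lam*(1-eps/2) - 1 <= G lam (eps/2)).
        { destruct (Gt_bounds lam (eps/2)) as [[A3 _] _]; try (unfold a in h; lra).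
          unfold Gt in A3. destruct (Rlt_dec 0 (eps/2)); lra. }
        unfold a in h. nra.
      + exists x. split; [lra|]. rewrite phi_pos by lra. rewrite Hg. f_equal. field. lra. }
    unfold Rmax. destruct (Rle_dec a 0); apply Rabs_def1; lra.
Qed.

Lemma Gneg_bounds lam y : lam <= -1 -> 0 < y <= 1 ->
  exp ((lam+1) * ln y) + lam <= G lam y <= exp ((lam+1) * ln y) - 1.
Proof. intros Hl Hy. unfold G. split; nra. Qed.

Lemma part2 u1 u2 : 0 <= u1 <= u2 -> u2 <= 1 ->
  is_lim (fun lam => PD_copula lam u1 u2) m_infty (Finite u1).
Proof.
  intros hu hu2. apply is_lim_spec. intros eps. simpl.
  pose proof (cond_pos eps) as Heps.
  destruct (Req_dec u1 0) as [E0|Hu1].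
  { subst. exists (-1). intros lam Hl. unfold PD_copula. rewrite phi0_small by lra.
    destruct (phi lam u2) eqn:E.
    - simpl. rewrite Rminus_0_r, Rabs_R0; lra.
    - simpl. rewrite Rminus_0_r, Rabs_R0; lra.
    - exfalso; eapply phi_not_minf; eauto. }
  assert (Hu1p : 0 < u1) by lra.
  set (e := eps/2).
  assert (He : 0 < e /\ e < eps) by (unfold e; lra).
  set (d1 := ln (u1+e) - ln u1).
  set (c2 := - ln (u1+e)).
  set (d2 := ln u1 - ln (u1 - e)).
  exists (-(4 + Rabs (2/(c2*d1)) + Rabs (8/(d2*d2)))).
  intros lam Hl.
  set (q := -lam - 1).
  pose proof (Rabs_pos (2/(c2*d1))). pose proof (Rabs_pos (8/(d2*d2))).
  assert (Hq3 : 3 < q) by (unfold q; lra).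
  assert (Hq1 : 2/(c2*d1) < q) by (eapply Rle_lt_trans; [apply RRle_abs|unfold q; lra]).
  assert (Hq2 : 8/(d2*d2) < q) by (eapply Rle_lt_trans; [apply RRle_abs|unfold q; lra]).
  assert (HK : 0 < lam * (lam+1)) by nra.
  unfold PD_copula. rewrite (phi_pos lam u1), (phi_pos lam u2) by lra. rewrite rbp.
  set (E1 := exp ((lam+1) * ln u1)).
  set (E2 := exp ((lam+1) * ln u2)).
  assert (Hln1 : ln u1 <= 0) by (rewrite <- ln_1; apply ln_le; lra).
  assert (Hln2 : ln u2 <= 0) by (rewrite <- ln_1; apply ln_le; lra).
  assert (Hln12 : ln u1 <= ln u2) by (apply ln_le; lra).
  assert (HE1 : 1 <= E1) by (rewrite <- exp_0; apply exp_le; nra).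
  assert (HE2 : 1 <= E2) by (rewrite <- exp_0; apply exp_le; nra).
  assert (HE21 : E2 <= E1) by (apply exp_le; nra).
  destruct (Gneg_bounds lam u1) as [A1 B1]; try lra.
  destruct (Gneg_bounds lam u2) as [A2 B2]; try lra.
  fold E1 in A1, B1. fold E2 in A2, B2.
  apply pinv_cases.
  - intros x Hx Hp.
    assert (Hx0 : 0 < x).
    { destruct (Req_dec x 0) as [Z|Z]; [|lra]. subst. rewrite phi0_small in Hp by lra. discriminate. }
    rewrite phi_pos in Hp by lra. injection Hp as Hp.
    assert (HT : G lam x = G lam u1 + G lam u2).
    { replace (G lam x) with (G lam x / (lam*(lam+1)) * (lam*(lam+1))) by (field; lra).
      rewrite Hp. field. lra. }
    destruct (Gneg_bounds lam x) as [A3 B3]; try lra.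
    set (Ex := exp ((lam+1) * ln x)) in *.
    assert (Up : x <= u1 + e).
    { destruct (Rle_lt_dec 1 (u1+e)); [lra|].
      destruct (Rle_lt_dec x (u1+e)) as [h|h]; auto. exfalso.
      assert (L1 : ln (u1+e) < ln x) by (apply ln_increasing; lra).
      assert (L2 : ln u1 < ln (u1+e)) by (apply ln_increasing; unfold e; lra).
      assert (L3 : ln (u1+e) < 0). { rewrite <- ln_1. apply ln_increasing; lra. }
      assert (Pd1 : 0 < d1) by (unfold d1; lra).
      assert (Pc2 : 0 < c2) by (unfold c2; lra).
      assert (Hx1 : Ex <= exp (q * c2)).
      { apply exp_le. unfold q, c2. nra. }
      assert (HE1' : E1 = exp (q*c2) * exp (q*d1)).
      { unfold E1. rewrite <- exp_plus. f_equal. unfold q, c2, d1. ring. }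
      pose proof (exp_ineq1_le (q*c2)). pose proof (exp_ineq1_le (q*d1)).
      assert (Hm : 2 < q*(c2*d1)).
      { apply Rmult_lt_compat_r with (r := c2*d1) in Hq1; [|nra].
        unfold Rdiv in Hq1. rewrite Rmult_assoc, Rinv_l, Rmult_1_r in Hq1; nra. }
      assert (Hp2 : (q*c2)*(q*d1) <= exp (q*c2) * (exp (q*d1) - 1)).
      { apply Rmult_le_compat; nra. }
      unfold q in *. nra. }
    assert (Lo : u1 - e <= x).
    { destruct (Rle_lt_dec u1 e); [lra|].
      destruct (Rle_lt_dec (u1 - e) x) as [h|h]; auto. exfalso.
      assert (L1 : ln x < ln (u1-e)) by (apply ln_increasing; lra).
      assert (L2 : ln (u1 - e) < ln u1) by (apply ln_increasing; unfold e in *; lra).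
      assert (Pd2 : 0 < d2) by (unfold d2; lra).
      assert (Hx1 : exp (-q * ln (u1 - e)) <= Ex).
      { apply exp_le. unfold q. nra. }
      assert (HE1' : exp (-q * ln (u1 - e)) = E1 * exp (q*d2)).
      { unfold E1. rewrite <- exp_plus. f_equal. unfold q, d2. ring. }
      pose proof (exp_sq (q*d2) ltac:(nra)).
      assert (Hm : 8 < q*(d2*d2)).
      { apply Rmult_lt_compat_r with (r := d2*d2) in Hq2; [|nra].
        unfold Rdiv in Hq2. rewrite Rmult_assoc, Rinv_l, Rmult_1_r in Hq2; nra. }
      assert (HB : q + 2 <= exp (q*d2)) by nra.
      assert (HEB : E1 * (q+2) <= E1 * exp (q*d2)) by (apply Rmult_le_compat_l; lra).
      unfold q in *. nra. }
    apply Rabs_def1; unfold e in *; lra.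
  - intros Hno. exfalso. apply Hno.
    assert (Hexp : exp (-1) < 1) by (rewrite <- exp_0; apply exp_increasing; lra).
    pose proof (exp_pos (-1)).
    set (dl := u1 * exp (-1)).
    assert (Hdl : 0 < dl <= 1) by (unfold dl; split; nra).
    assert (Hlnd : ln dl = ln u1 - 1) by (unfold dl; rewrite ln_mult, ln_exp by lra; ring).
    destruct (Gneg_bounds lam dl) as [A3 B3]; try lra.
    rewrite Hlnd in A3.
    assert (HE3 : exp ((lam + 1) * (ln u1 - 1)) = E1 * exp q).
    { unfold E1. rewrite <- exp_plus. f_equal. unfold q. ring. }
    pose proof (exp_sq q ltac:(lra)).
    assert (HEq : E1 * (q+3) <= E1 * exp q) by (apply Rmult_le_compat_l; nra).
    destruct (exists_sol lam dl (G lam u1 + G lam u2)) as [x [Hx Hg]]; auto.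
    + rewrite G_one. pose proof (G_nonneg lam u1 ltac:(lra) Hu1p).
      pose proof (G_nonneg lam u2 ltac:(lra) ltac:(lra)).
      split; [lra|]. unfold q in *. nra.
    + exists x. split; [lra|]. rewrite phi_pos by lra. rewrite Hg. f_equal. field. lra.
Qed.

Theorem proposition3 (u1 u2 : R) (hu1 : 0 <= u1 <= 1) (hu2 : 0 <= u2 <= 1) :
  is_lim (fun lam => PD_copula lam u1 u2) p_infty (Finite (Rmax (u1 + u2 - 1) 0)) /\
  is_lim (fun lam => PD_copula lam u1 u2) m_infty (Finite (Rmin u1 u2)).
Proof.
  split. { apply part1; auto. }
  destruct (Rle_dec u1 u2).
  - rewrite Rmin_left by auto. apply part2; lra.
  - rewrite Rmin_right by lra.
    eapply is_lim_ext; [|apply (part2 u2 u1); lra].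
    intros lam; simpl. unfold PD_copula. rewrite Rbar_plus_comm. reflexivity.
Qed.
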